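(* Let $z^+=(z_1^+,\dots,z_n^+)$ and $z^-=(z_1^-,\dots,z_n^-)$ be sequences of integers, $I_1=\{i:z_i^+>0\}$, $I_2=\{i:z_i^->0\}$, and $f_z(a)=\sum_i|z_i^+-a_i^+|+\sum_i|z_i^--a_i^-|$ for bi-sequences $a=(a^+,a^-)$. Let $d\in B_n$ satisfy $f_z(d)=\min_{a\in B_n}f_z(a)$. (1) If $d_i^+>0$ for some $i\notin I_1$, then there exists $d_*\in B_n$ with $d_{*i}^+=0$ for all $i\notin I_1$ and $f_z(d_* )=f_z(d)$. (2) If $d_i^->0$ for some $i\notin I_2$, then there exists $d_*\in B_n$ with $d_{*i}^-=0$ for all $i\notin I_2$ and $f_z(d_* )=f_z(d)$.
   Context: $B_n$ is the set of all bi-degree sequences $a=(a^+,a^-)$ (out-degrees $a_i^+$, in-degrees $a_i^-$) of simple directed graphs (no loops, no multiple edges) on nodes $\{1,\dots,n\}$. *)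

(* Defs.v *)
From mathcomp Require Import all_boot all_order all_algebra.
Set Implicit Arguments. Unset Strict Implicit. Unset Printing Implicit Defensive.
Import Order.TTheory GRing.Theory Num.Theory.
Local Open Scope ring_scope.

(* A bi-sequence on nodes 'I_n : a pair (out-sequence, in-sequence). *)
Definition biseq (n : nat) := (('I_n -> nat) * ('I_n -> nat))%type.

(* A simple directed graph on 'I_n: an irreflexive relation g
   (g i j means there is an arc i -> j); multiple arcs are impossible. *)
Definition simple_digraph (n : nat) (g : rel 'I_n) : Prop := forall i, ~~ g i i.

Definition outdeg (n : nat) (g : rel 'I_n) (i : 'I_n) : nat := #|[set j | g i j]|.
Definition indeg (n : nat) (g : rel 'I_n) (i : 'I_n) : nat := #|[set j | g j i]|.

Definition in_Bn (n : nat) (a : biseq n) : Prop :=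
  exists g : rel 'I_n, simple_digraph g /\
    (forall i, a.1 i = outdeg g i) /\ (forall i, a.2 i = indeg g i).

Definition fz (n : nat) (zp zm : 'I_n -> int) (a : biseq n) : int :=
  \sum_(i < n) `|zp i - (a.1 i)%:Z| + \sum_(i < n) `|zm i - (a.2 i)%:Z|.

(* Main.v *)
Require Import Defs.
From mathcomp Require Import all_boot all_order all_algebra.
From mathcomp Require Import zify.
Import Order.TTheory GRing.Theory Num.Theory.
Local Open Scope ring_scope.

Lemma card_predE (T : finType) (b : pred T) :
  #|[set x | b x]| = (\sum_x (b x : nat))%N.
Proof.
rewrite -sum1_card big_mkcond; apply: eq_bigr => x _; rewrite inE.
by case: (b x).
Qed.

Lemma PoszS (I : finType) (F : I -> nat) :
  ((\sum_i F i)%N)%:Z = \sum_i (F i)%:Z.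
Proof.
rewrite -[LHS]intz sumMz; apply: eq_bigr => i _; by rewrite intz.
Qed.

Lemma part1 (n : nat) (zp zm : 'I_n -> int) (d : biseq n) :
  in_Bn d ->
  (forall a : biseq n, in_Bn a -> fz zp zm d <= fz zp zm a) ->
     exists ds : biseq n, in_Bn ds /\
       (forall i : 'I_n, ~~ (0 < zp i) -> ds.1 i = 0%N) /\
       fz zp zm ds = fz zp zm d.
Proof.
move=> [g [sg [H1 H2]]] Hmin.
set P := fun i => 0 < zp i.
pose g' : rel 'I_n := fun i j => P i && g i j.
have sg' : simple_digraph g' by move=> i; rewrite /g' negb_and sg orbT.
pose ds : biseq n := (fun i => outdeg g' i, fun i => indeg g' i).
have Bds : in_Bn ds by exists g'.
exists ds; split => //; split.
  move=> i /negbTE Hi; rewrite /= /outdeg /g'.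
  rewrite card_predE big1 // => j _; by rewrite /P Hi.
apply/eqP; rewrite eq_le Hmin // andbT.
pose r j := #|[set i | ~~ P i && g i j]|.
have Hin j : indeg g j = (indeg g' j + r j)%N.
  rewrite /indeg /r /g' !card_predE -big_split /=; apply: eq_bigr => i _.
  by case: (P i); case: (g i j).
have Hdc : (\sum_j r j = \sum_i (~~ P i) * outdeg g i)%N.
  rewrite /r; under eq_bigr do rewrite card_predE.
  rewrite exchange_big; apply: eq_bigr => i _.
  rewrite /outdeg card_predE big_distrr /=; apply: eq_bigr => j _.
  by case: (P i); case: (g i j).
have Hout i : `|zp i - (outdeg g' i)%:Z| + ((~~ P i) * outdeg g i)%N%:Z
              = `|zp i - (outdeg g i)%:Z|.
  rewrite /outdeg /g'; case Pi: (P i).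
    rewrite /=.
    have -> : [set j | true && g i j] = [set j | g i j].
      by apply/setP => j; rewrite !inE.
    by rewrite mul0n addr0.
  have -> : [set j | false && g i j] = set0 by apply/setP => j; rewrite !inE.
  rewrite cards0 mul1n; move: Pi; rewrite /P => /negbT; rewrite -leNgt.
  move: #|[set j | g i j]| => m; lia.
have Hinle j : `|zm j - (indeg g' j)%:Z| <= `|zm j - (indeg g j)%:Z| + (r j)%:Z.
  rewrite Hin; move: (indeg g' j) (r j) => a b; lia.
rewrite /fz /=.
have -> : \sum_(i < n) `|zp i - (d.1 i)%:Z| =
   \sum_(i < n) `|zp i - (outdeg g' i)%:Z| + \sum_i ((~~ P i) * outdeg g i)%N%:Z.
  rewrite -big_split /=; apply: eq_bigr => i _; by rewrite Hout H1.
rewrite -PoszS -Hdc PoszS.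
rewrite -addrA lerD2l -big_split /=; apply: ler_sum => j _.
by rewrite H2 addrC.
Qed.

Theorem proposition3 (n : nat) (zp zm : 'I_n -> int) (d : biseq n) :
  in_Bn d ->
  (forall a : biseq n, in_Bn a -> fz zp zm d <= fz zp zm a) ->
  ((exists i : 'I_n, ~~ (0 < zp i) /\ (0 < d.1 i)%N) ->
     exists ds : biseq n, in_Bn ds /\
       (forall i : 'I_n, ~~ (0 < zp i) -> ds.1 i = 0%N) /\
       fz zp zm ds = fz zp zm d) /\
  ((exists i : 'I_n, ~~ (0 < zm i) /\ (0 < d.2 i)%N) ->
     exists ds : biseq n, in_Bn ds /\
       (forall i : 'I_n, ~~ (0 < zm i) -> ds.2 i = 0%N) /\
       fz zp zm ds = fz zp zm d).
Proof.
move=> Bd Hmin; split=> _; first exact: part1.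
pose sw (a : biseq n) : biseq n := (a.2, a.1).
have Bsw a : in_Bn a -> in_Bn (sw a).
  move=> [g [sg [H1 H2]]]; exists (fun i j => g j i); split => //.
have fsw a : fz zm zp (sw a) = fz zp zm a by rewrite /fz addrC.
have Hmin' : forall a, in_Bn a -> fz zm zp (sw d) <= fz zm zp a.
  move=> a Ba; have -> : fz zm zp a = fz zm zp (sw (sw a)) by case: (a).
  by rewrite !fsw; apply/Hmin/Bsw.
have [ds [Bds [H0 Hf]]] := @part1 _ zm zp (sw d) (Bsw _ Bd) Hmin'.
exists (sw ds); split; first exact: Bsw.
split => //; move: Hf; rewrite /fz /= addrC => ->; by rewrite addrC.
Qed.
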